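(* Let $P,Q$ be fixed probability distributions on $\mathbb{R}$ (not depending on $n$) such that $Q$ is absolutely continuous with respect to $P$, and let $k=k_n\in\{2,\dots,n\}$ be a sequence. If $R(T^* )\to 0$ as $n\to\infty$, then $k_n\to\infty$.
   Context: Weighted hidden clique model. For $n\ge 2$ and $k\in\{2,\dots,n\}$, let $E=\{(i,j):1\le i<j\le n\}$ and for $S\subseteq[n]$ let $E(S)=\{(i,j):i,j\in S,\ i<j\}$. The observation is $\mathbf{X}=(X_e)_{e\in E}$. Under $\mathcal{H}_0$ (law $\mathbb{P}_0$) the $X_e$ are i.i.d. $P$. Under $\mathcal{H}_1$ (law $\mathbb{P}_1$) a uniformly random $k$-subset $S^*\subseteq[n]$ is chosen and, conditionally on $S^*$, the $X_e$ are independent with $X_e\sim Q$ for $e\in E(S^* )$ and $X_e\sim P$ otherwise. The risk of a test $T:\mathbb{R}^{\binom n2}\to\{0,1\}$ is $R(T)=\mathbb{P}_0(T=1)+\mathbb{P}_1(T=0)$, and $R(T^* )=\inf_T R(T)$ is the optimal risk (attained by the likelihood ratio test $T^*$). *)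

(* Defs.v *)
From HB Require Import structures.
From mathcomp Require Import all_boot all_order all_algebra.
From mathcomp Require Import all_classical all_reals all_analysis.
Import Order.TTheory GRing.Theory Num.Theory.

Set Implicit Arguments.
Unset Strict Implicit.
Unset Printing Implicit Defensive.

Local Open Scope classical_set_scope.
Local Open Scope ring_scope.

Definition Edge (n : nat) := {e : 'I_n * 'I_n | (e.1 < e.2)%N}.

(* Observation space R^E, realised as the tuple space R^{|E|} equipped with
   the product sigma-algebra (the library's measurable structure on tuples);
   coordinate X_e is the (enum_rank e)-th entry. *)
Definition Obs (R : realType) (n : nat) := (#|{: Edge n}|).-tuple R.

Definition coord (R : realType) (n : nat) (x : Obs R n) (e : Edge n) : R :=
  tnth x (enum_rank e).

Definition in_clique (n : nat) (S : {set 'I_n}) (e : Edge n) : bool :=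
  ((sval e).1 \in S) && ((sval e).2 \in S).

(* mu is the product law of the independent coordinates X_e ~ law e:
   its value on every measurable rectangle is the product of the marginals
   (this determines mu uniquely on the product sigma-algebra). *)
Definition is_product_law (R : realType) (n : nat)
  (mu : set (Obs R n) -> \bar R) (law : Edge n -> set R -> \bar R) : Prop :=
  forall A : Edge n -> set R, (forall e, measurable (A e)) ->
    mu [set x | forall e, A e (coord x e)] = (\prod_(e : Edge n) law e (A e))%E.

Definition H1_law (R : realType) (n k : nat)
  (muS : {set 'I_n} -> set (Obs R n) -> \bar R) (A : set (Obs R n)) : \bar R :=
  ((('C(n, k))%:R)^-1%:E * \sum_(S : {set 'I_n} | #|S| == k) muS S A)%E.

(* Risk of a test T : Obs -> {0,1} (true = reject H0 / declare H1). *)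
Definition risk (R : realType) (n k : nat) (mu0 : set (Obs R n) -> \bar R)
  (muS : {set 'I_n} -> set (Obs R n) -> \bar R) (T : Obs R n -> bool) : \bar R :=
  (mu0 (T @^-1` [set true]) + H1_law k muS (T @^-1` [set false]))%E.

Definition opt_risk (R : realType) (n k : nat) (mu0 : set (Obs R n) -> \bar R)
  (muS : {set 'I_n} -> set (Obs R n) -> \bar R) : \bar R :=
  ereal_inf [set r | exists T : Obs R n -> bool,
                 measurable_fun [set: Obs R n] T /\ r = risk k mu0 muS T].

(* Main.v *)
Require Import Defs.
From HB Require Import structures.
From mathcomp Require Import all_boot all_order all_algebra.
From mathcomp Require Import all_classical all_reals all_analysis.
From mathcomp Require Import measurable_realfun.
From mathcomp Require Import lra ring.
Import Order.TTheory GRing.Theory Num.Theory.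

Local Open Scope classical_set_scope.
Local Open Scope ring_scope.
Section epsdelta.
Context d (T : measurableType d) (R : realType).
Variables (P Q : probability T R).
Local Open Scope ereal_scope.

Lemma eps_delta : Q `<< P -> forall e : R, (0 < e)%R ->
  exists dl : R, (0 < dl)%R /\
  forall A, measurable A -> P A < dl%:E -> Q A < e%:E.
Proof.
move=> /null_content_dominatesP numu.
apply/not_forallP => -[e] /not_implyP[e0] /forallNP H.
have {H} : forall n, exists A,
    [/\ measurable A, P A < (2 ^- n.+1)%:E & Q A >= e%:E].
  move=> n; have /not_andP[|] := H (2 ^- n.+1); first by rewrite invr_gt0.
  move=> /existsNP[A] /not_implyP[mA] /not_implyP[Aab] /negP.
  by rewrite -leNgt => eint; exists A.
move=> /choice[F /= H].
have mF i : measurable (F i) by have [] := H i.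
have : P (lim_sup_set F) = 0.
  apply: lim_sup_set_cvg0 => //.
  have h : \sum_(0 <= n < k) (1 / 2 ^+ n.+1)%:E @[k --> \oo] --> (1%E : \bar R).
    apply/fine_cvgP; split.
      apply: nearW => /= n; rewrite sum_fin_num//.
      by apply/allP => /= r /mapP[/= k _] ->.
    have := @cvg_geometric_series_half R 1 0; rewrite {1}/series/= expr0 divr1.
    under [in X in _ -> X]eq_fun do rewrite sumEFin.
    by under eq_fun do under eq_bigr do rewrite addn1 natrX.
  apply: (@le_lt_trans _ _ (\sum_(0 <= n <oo) (1 / (2 ^ n.+1))%:E)).
    apply: lee_lim.
    - exact: is_cvg_ereal_nneg_natsum_cond.
    - by apply/cvg_ex; exists 1.
    - apply: nearW => /= n; apply: lee_sum => i _.
      by have [_ /ltW + _] := H i; rewrite div1r.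
  by move/cvg_lim : h => ->//; rewrite ltry.
have : measurable (lim_sup_set F).
  by apply: bigcap_measurable => // k _; exact: bigcup_measurable.
move=> /numu /[apply].
apply/eqP; rewrite neq_lt// ltNge measure_ge0//=.
suff : Q (lim_sup_set F) >= e%:E by exact: lt_le_trans.
have echarge n : e%:E <= Q (\bigcup_(j >= n) F j).
  have [_ _ /le_trans] := H n; apply.
  rewrite le_measure// ?inE//; first exact: bigcup_measurable.
  by apply: bigcup_sup => /=.
have /(_ _ _)/cvg_lim <-// := lim_sup_set_cvg Q F.
  apply: lime_ge.
    apply: ereal_nonincreasing_is_cvgn => a b ab.
    rewrite le_measure ?inE//; [exact: bigcup_measurable|
                                exact: bigcup_measurable|].
    by apply: bigcup_subset => n/=; exact: leq_trans.
  by apply: nearW => k; exact: echarge.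
by rewrite -ge0_fin_numE// fin_num_measure//; exact: bigcup_measurable.
Qed.

End epsdelta.
Arguments eps_delta {d T R P Q}.
Definition epsK d (T : measurableType d) (R : realType)
  (mQ mP : set T -> \bar R) :=
  forall e : R, (0 < e)%R -> exists K : R, (0 <= K)%R /\
    forall A, measurable A -> (mQ A <= e%:E + K%:E * mP A)%E.
Arguments epsK {d T R}.

Section epsK_lemmas.
Context d (T : measurableType d) (R : realType).
Local Open Scope ereal_scope.

Lemma epsK_dom (P Q : probability T R) : Q `<< P -> epsK Q P.
Proof.
move=> QP e e0; have [dl [dl0 H]] := eps_delta QP e e0.
exists (dl^-1)%R; split; first by rewrite invr_ge0 ltW.
move=> A mA; have [PAd|PAd] := ltP (P A) dl%:E.
  apply: (le_trans (ltW (H A mA PAd))); rewrite leeDl// mule_ge0//.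
  by rewrite lee_fin invr_ge0 ltW.
apply: (le_trans (probability_le1 Q mA)).
apply: (@le_trans _ _ ((dl^-1)%R%:E * P A)); last by rewrite leeDr// lee_fin ltW.
apply: (@le_trans _ _ ((dl^-1)%R%:E * dl%:E)).
  by rewrite -EFinM mulVf ?gt_eqF.
by rewrite lee_pmul2l// lte_fin invr_gt0.
Qed.

Lemma epsK_fun (P Q : probability T R) : epsK Q P ->
  forall e : R, (0 < e)%R -> exists K : R, (0 <= K)%R /\
  forall h : T -> \bar R, measurable_fun setT h ->
    (forall x, 0 <= h x <= 1) ->
    \int[Q]_x h x <= e%:E + K%:E * \int[P]_x h x.
Proof.
move=> QP e e0.
have e20 : (0 < e / 2)%R by rewrite divr_gt0.
have [K0 [K00 HK]] := QP _ e20.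
exists (K0 / (e / 2))%R; split; first by rewrite divr_ge0// ltW.
move=> h mh h01.
pose B := [set x | (e / 2)%:E <= h x].
have mB : measurable B.
  by rewrite -[B]setTI; exact: measurable_realfun.emeasurable_fun_c_infty.
have h0 x : 0 <= h x by have /andP[] := h01 x.
have step1 : \int[Q]_x h x <= (e / 2)%:E + Q B.
  apply: (@le_trans _ _ (\int[Q]_x ((e / 2)%:E + (\1_B x)%:E))).
    apply: ge0_le_integral => //.
    - apply: emeasurable_funD => //; apply/measurable_EFinP.
      exact: measurable_realfun.measurable_indic.
    - move=> x _; rewrite /B indicE; case: (boolP (x \in B)).
        by rewrite inE => _; rewrite -EFinD; have /andP[_ ] := h01 x;
          move/le_trans; apply; rewrite lee_fin lerDr ltW.
      rewrite notin_setE /= => /negP; rewrite -ltNge => hx.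
      by rewrite adde0 ltW.
  rewrite ge0_integralD//; last first.
  all: try by move=> x _; rewrite lee_fin ?ltW.
  all: try by apply/measurable_EFinP; exact: measurable_realfun.measurable_indic.
  rewrite integral_cst// integral_indic// setIT.
  apply: leeD => //; rewrite -[leRHS]mule1; apply: lee_wpmul2l.
    by rewrite lee_fin ltW.
  by apply: probability_le1.
have step2 : (e / 2)%:E * P B <= \int[P]_x h x.
  have -> : P B = \int[P]_x (\1_B x)%:E by rewrite integral_indic// setIT.
  rewrite -ge0_integralZl//; first last.
  all: try by move=> x _; rewrite lee_fin ?ltW.
  all: try by rewrite lee_fin ?ltW.
  all: try by apply/measurable_EFinP; exact: measurable_realfun.measurable_indic.
  apply: ge0_le_integral => //.
  - by move=> x _; rewrite mule_ge0// lee_fin ltW.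
  - apply: emeasurable_funM => //; apply/measurable_EFinP.
    exact: measurable_realfun.measurable_indic.
  - move=> x _; rewrite indicE; case: (boolP (x \in B)).
      by rewrite inE mule1.
    by rewrite mule0.
apply: (le_trans step1).
apply: (@le_trans _ _ ((e / 2)%:E + ((e / 2)%:E + K0%:E * P B))).
  by rewrite leeD2l// HK.
rewrite addeA -EFinD -splitr leeD2l//.
have -> : (K0 / (e / 2))%:E * \int[P]_x h x =
          K0%:E * (((e / 2)^-1)%R%:E * \int[P]_x h x).
  by rewrite muleA -EFinM.
apply: lee_wpmul2l; first by rewrite lee_fin.
rewrite -(@lee_pmul2l _ (e / 2)%:E) ?lte_fin// muleA -EFinM mulfV ?gt_eqF//.
by rewrite mul1e.
Qed.

End epsK_lemmas.
Arguments epsK_fun {d T R P Q}.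
Arguments epsK_dom {d T R P Q}.
Section tuples.
Variable R : realType.
Local Open Scope ereal_scope.

Definition rect {N : nat} (A : 'I_N -> set R) : set (N.-tuple R) :=
  [set u | forall i, A i (tnth u i)].

Definition has_rect {N : nat} (mu : set (N.-tuple R) -> \bar R)
  (L : 'I_N -> set R -> \bar R) :=
  forall A : 'I_N -> set R, (forall i, measurable (A i)) ->
    mu (rect A) = \prod_(i < N) L i (A i).

Lemma measurable_rect N (A : 'I_N -> set R) :
  (forall i, measurable (A i)) -> measurable (rect A).
Proof.
move=> mA.
have -> : rect A = \bigcap_(i in [set: 'I_N]) ((@tnth N R ^~ i) @^-1` A i).
  by apply/seteqP; split => u /=; [move=> H i _; exact: H|move=> H i; exact: H].
apply: fin_bigcap_measurable; first exact: finite_finset.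
by move=> i _; rewrite -[X in measurable X]setTI; apply: measurable_tnth.
Qed.

Definition consf (m : nat) (p : R * m.-tuple R) : m.+1.-tuple R :=
  [tuple of p.1 :: p.2].

Lemma measurable_consf m : measurable_fun [set: R * m.-tuple R] (@consf m).
Proof. exact: measurable_cons. Qed.

HB.instance Definition _ m :=
  isMeasurableFun.Build _ _ _ _ (@consf m) (@measurable_consf m).

Lemma consf_rect m (A : 'I_m.+1 -> set R) :
  @consf m @^-1` rect A = A ord0 `*` rect (fun j => A (lift ord0 j)).
Proof.
apply/seteqP; split => [[x y] /= H|[x y] [/= H0 H1] i].
  split; first exact: (H ord0).
  by move=> j; have := H (lift ord0 j); rewrite /consf tnthS.
case: (unliftP ord0 i) => [j ->|->]; last exact: H0.
by rewrite /consf tnthS; exact: H1.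
Qed.

Lemma tprod_ex (P Q : probability R R) : epsK Q P -> forall m,
  exists (PP QQ : probability (m.-tuple R) R),
    [/\ has_rect PP (fun _ => P), has_rect QQ (fun _ => Q) & epsK QQ PP].
Proof.
move=> QP; elim => [|m [PP [QQ [HP HQ PQ]]]].
  exists (\d_ [tuple]), (\d_ [tuple]); split.
  - move=> A _; rewrite big_ord0; have := @diracE _ _ R [tuple] (rect A).
    by rewrite mem_set//; move=> -[].
  - move=> A _; rewrite big_ord0; have := @diracE _ _ R [tuple] (rect A).
    by rewrite mem_set//; move=> -[].
  - move=> e e0; exists 1%R; split => // A mA.
    by rewrite mul1e leeDr// lee_fin ltW.
exists (distribution (P \x PP) (@consf m)).
exists (distribution (Q \x QQ) (@consf m)).
split.
- move=> A mA.
  transitivity ((P \x PP) (@consf m @^-1` rect A)); first by [].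
  rewrite consf_rect product_measure1E//; last first.
    by apply: measurable_rect.
  by rewrite big_ord_recl; congr (_ * _); apply: HP.
- move=> A mA.
  transitivity ((Q \x QQ) (@consf m @^-1` rect A)); first by [].
  rewrite consf_rect product_measure1E//; last first.
    by apply: measurable_rect.
  by rewrite big_ord_recl; congr (_ * _); apply: HQ.
move=> e e0.
have e20 : (0 < e / 2)%R by rewrite divr_gt0.
have [K1 [K10 H1]] := PQ _ e20.
pose e' := (e / 2 / (K1 + 1))%R.
have e'0 : (0 < e')%R by rewrite divr_gt0// ltr_wpDl.
have [K2 [K20 H2]] := epsK_fun QP e' e'0.
exists (K1 * K2)%R; split; first exact: mulr_ge0.
move=> B mB.
pose C := @consf m @^-1` B.
have mC : measurable C.
  by rewrite /C -[X in measurable X]setTI; exact: measurable_consf.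
suff : \int[Q]_x QQ (xsection C x) <=
       e%:E + (K1 * K2)%:E * \int[P]_x PP (xsection C x).
  by move=> h; exact: h.
pose X := \int[P]_x PP (xsection C x).
have X0 : 0 <= X by apply: integral_ge0 => x _.
have X1 : X <= 1 by exact: (probability_le1 (P \x PP) mC).
have mh : measurable_fun setT (fun x => PP (xsection C x)).
  exact: measurable_fun_xsection.
have mhQ : measurable_fun setT (fun x => QQ (xsection C x)).
  exact: measurable_fun_xsection.
have h01 : forall x, 0 <= PP (xsection C x) <= 1.
  move=> x; rewrite measure_ge0/=; apply: probability_le1.
  exact: measurable_xsection.
apply: (@le_trans _ _ (\int[Q]_x ((e / 2)%:E + K1%:E * PP (xsection C x)))).
  apply: ge0_le_integral => //.
  - apply: emeasurable_funD => //; apply: emeasurable_funM => //.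
  - move=> x _; apply: H1; exact: measurable_xsection.
rewrite ge0_integralD//; last first.
all: try by move=> x _; apply: mule_ge0; rewrite ?lee_fin.
all: try by move=> x _; rewrite lee_fin ltW.
all: try by apply: emeasurable_funM.
rewrite [X in X + _](_ : _ = (e / 2)%:E * Q setT); last exact: integral_cst.
rewrite ge0_integralZl//.
apply: (@le_trans _ _ ((e / 2)%:E + K1%:E * (e'%:E + K2%:E * X))).
  apply: leeD.
    rewrite -[leRHS]mule1; apply: lee_wpmul2l; first by rewrite lee_fin ltW.
    by apply: probability_le1.
  by apply: lee_wpmul2l; [rewrite lee_fin|exact: H2].
have Xfin : X \is a fin_num by rewrite ge0_fin_numE// (le_lt_trans X1)// ltry.
rewrite -/X -(fineK Xfin) -!EFinM -!EFinD lee_fin.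
have -> : (K1 * (e' + K2 * fine X) = K1 * e' + K1 * K2 * fine X)%R.
  by rewrite mulrDr mulrA.
rewrite addrA lerD2r {2}(splitr e) lerD2l /e'.
rewrite mulrA ler_pdivrMr ?ltr_wpDl// mulrC ler_wpM2l ?lerDl//.
exact: ltW.
Qed.

End tuples.
Arguments rect {R N}.
Arguments has_rect {R N}.
Arguments measurable_rect {R N}.
Arguments tprod_ex {R P Q}.
Section generators.
Variable R : realType.
Local Open Scope ereal_scope.

Definition rectG (N : nat) : set (set (N.-tuple R)) :=
  [set X | exists A : 'I_N -> set R, (forall i, measurable (A i)) /\ X = rect A].

Lemma bigsetU_ex T (I : eqType) (r : seq I) (S : I -> set (set T)) X :
  (\big[setU/set0]_(i <- r) S i) X -> exists i, S i X.
Proof.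
elim/big_ind: _ => //; last by move=> i _ H; exists i.
by move=> Y1 Y2 H1 H2 [/H1|/H2].
Qed.

Lemma rectI N (A B : 'I_N -> set R) :
  rect A `&` rect B = rect (fun i => A i `&` B i).
Proof.
apply/seteqP; split => u /=; first by move=> [H1 H2] i; split.
by move=> H; split => i; have [] := H i.
Qed.

Lemma rectT N : rect (fun _ : 'I_N => [set: R]) = setT.
Proof. by apply/seteqP; split => u. Qed.

Lemma measurable_rectG N : measurable = <<s @rectG N >>.
Proof.
apply/seteqP; split.
  apply: smallest_sub; first exact: smallest_sigma_algebra.
  move=> X /bigsetU_ex [i [B mB <-]]; apply: sub_sigma_algebra.
  exists (fun k => if k == i then B else setT); split.
    by move=> k; case: ifP.
  apply/seteqP; split => u /=.
    by move=> [_ uB] k; case: ifPn => // /eqP ->.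
  by move=> H; split => //; have := H i; rewrite eqxx.
apply: smallest_sub; first exact: sigma_algebra_measurable.
by move=> X [A [mA ->]]; exact: measurable_rect.
Qed.

Lemma setI_closed_rectG N : setI_closed (@rectG N).
Proof.
move=> X Y [A [mA ->]] [B [mB ->]]; exists (fun i => A i `&` B i); split.
  by move=> i; exact: measurableI.
exact: rectI.
Qed.

End generators.
Section pfw.
Context d1 d2 (T1 : measurableType d1) (T2 : measurableType d2) (R : realType).
Variables (mu : {measure set T1 -> \bar R}) (f : {mfun T1 >-> T2}).
Local Open Scope ereal_scope.

Definition pfw := fun A => mu (f @^-1` A).

Let pfw0 : pfw set0 = 0.
Proof. by rewrite /pfw preimage_set0 measure0. Qed.

Let pfw_ge0 A : 0 <= pfw A.
Proof. exact: measure_ge0. Qed.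

Let pfw_sigma_additive : semi_sigma_additive pfw.
Proof.
move=> F mF tF mUF; rewrite /pfw preimage_bigcup.
apply: measure_semi_sigma_additive.
- by move=> n; exact: measurable_funPTI.
- apply/trivIsetP => /= i j _ _ ij; rewrite -preimage_setI.
  by move/trivIsetP : tF => /(_ _ _ _ _ ij) ->//; rewrite preimage_set0.
- by rewrite -preimage_bigcup; exact: measurable_funPTI.
Qed.

HB.instance Definition _ := isMeasure.Build _ _ _ pfw
  pfw0 pfw_ge0 pfw_sigma_additive.

End pfw.
Arguments pfw {d1 d2 T1 T2 R}.

Section merge.
Variables (R : realType) (N : nat) (F : {set 'I_N}).
Local Open Scope ereal_scope.

Definition mergef (p : N.-tuple R * #|F|.-tuple R) : N.-tuple R :=
  [tuple (if i \in F then nth 0%R p.2 (index i (enum F)) else tnth p.1 i) | i < N].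

Lemma index_enum_val (j : 'I_#|F|) : index (enum_val j) (enum F) = j.
Proof. by rewrite (enum_val_nth (enum_val j)) index_uniq ?enum_uniq // -cardE. Qed.

Lemma enum_valKF {i} (iF : i \in F) : enum_val (@enum_rank_in _ i _ iF i) = i.
Proof. exact: (@enum_rankK_in _ i _ iF i iF). Qed.

Lemma mergef_F p (j : 'I_#|F|) : tnth (mergef p) (enum_val j) = tnth p.2 j.
Proof. by rewrite tnth_mktuple enum_valP index_enum_val (tnth_nth 0%R). Qed.

Lemma measurable_mergef : measurable_fun setT mergef.
Proof.
apply/measurable_fun_tnthP => i.
case: (boolP (i \in F)) => iF.
  have -> : (@tnth N R ^~ i \o mergef) = (fun p => tnth p.2 (@enum_rank_in _ i _ iF i)).
    by apply/funext => p /=; rewrite -[in LHS](enum_valKF iF) mergef_F.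
  exact: measurableT_comp (measurable_tnth _) measurable_snd.
have -> : (@tnth N R ^~ i \o mergef) = (fun p => tnth p.1 i).
  by apply/funext => p /=; rewrite tnth_mktuple (negbTE iF).
exact: measurableT_comp (measurable_tnth i) measurable_fst.
Qed.

HB.instance Definition _ := isMeasurableFun.Build _ _ _ _ mergef measurable_mergef.

Lemma mergef_rect (A : 'I_N -> set R) :
  mergef @^-1` rect A = rect (fun i => if i \in F then setT else A i) `*`
                        rect (fun j : 'I_#|F| => A (enum_val j)).
Proof.
apply/seteqP; split => [[y u] /= H|[y u] [/= H1 H2] i].
  split => [i|j].
    case: ifPn => // iF; have := H i; by rewrite tnth_mktuple (negbTE iF).
  by have := H (enum_val j); rewrite mergef_F.
case: (boolP (i \in F)) => iF.
  by rewrite -(enum_valKF iF) mergef_F; apply: H2.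
by have := H1 i; rewrite (negbTE iF) tnth_mktuple (negbTE iF).
Qed.

Lemma merge_law (mu0 mu : {measure set (N.-tuple R) -> \bar R})
  (P L : probability R R) (LL : probability (#|F|.-tuple R) R) :
  has_rect mu0 (fun _ => P) -> has_rect LL (fun _ => L) ->
  has_rect mu (fun i => if i \in F then L else P) ->
  forall A, measurable A -> mu A = (mu0 \x LL) (mergef @^-1` A).
Proof.
move=> H0 HL H A mA.
have Tr : forall (X : probability R R), X setT = 1 by move=> X; exact: probability_setT.
have Gg : forall k : nat, @rectG R N setT.
  by move=> _; exists (fun _ => setT); split => //; rewrite rectT.
have gc : \bigcup_(k : nat) (setT : set (N.-tuple R)) = setT.
  by rewrite bigcup_const.
have m1goo : forall k : nat, mu setT < +oo.
  move=> _; rewrite -(rectT R N) H// big1 => [|i _]; [exact: ltry|by case: ifP => _; exact: Tr].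
have m1m2 : forall X, @rectG R N X -> mu X = pfw (mu0 \x LL) mergef X.
  move=> X [B [mB ->]]; rewrite H//.
  rewrite /pfw mergef_rect.
  rewrite [RHS](_ : _ = mu0 (rect (fun i : 'I_N => if i \in F then [set: R] else B i)) *
     LL (rect (fun j : 'I_#|F| => B (enum_val j)))); last first.
    apply: product_measure1E.
    + by apply: measurable_rect => i; case: ifP.
    + by apply: measurable_rect.
  rewrite H0; last by move=> i; case: ifP.
  rewrite HL; last by move=> j; exact: mB.
  have E1 : \prod_(i < N) P (if i \in F then setT else B i) =
            \prod_(i < N | i \notin F) P (B i).
    rewrite [RHS]big_mkcond /=; apply: eq_bigr => i _.
    by case: ifP => _ //=; exact: Tr.
  have E2 : \prod_(j < #|F|) L (B (enum_val j)) = \prod_(i in F) L (B i).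
    by rewrite [RHS]big_enum_val.
  have E3 : \prod_(i < N) (if i \in F then L else P) (B i) =
     \prod_(i in F) L (B i) * \prod_(i < N | i \notin F) P (B i).
    rewrite (bigID (fun i => i \in F)) /=; congr (_ * _).
      by apply: eq_bigr => i ->.
    by apply: eq_bigr => i /negbTE ->.
  by rewrite E3 E1 E2 muleC.
exact: (measure_unique (@rectG R N) (fun _ => setT) (@measurable_rectG R N)
  (@setI_closed_rectG R N) Gg gc mu (pfw (mu0 \x LL) mergef) m1m2 m1goo A mA).
Qed.

End merge.
Arguments merge_law {R N F mu0 mu P L LL}.
Arguments measurable_mergef {R N F}.
Section mixbound.
Variables (R : realType) (N : nat) (F : {set 'I_N}).
Local Open Scope ereal_scope.

Lemma mix_bound (mu0 muS : {measure set (N.-tuple R) -> \bar R})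
  (P Q : probability R R) (PP QQ : probability (#|F|.-tuple R) R) (e K : R) :
  has_rect mu0 (fun _ => P) ->
  has_rect muS (fun i => if i \in F then Q else P) ->
  has_rect PP (fun _ => P) -> has_rect QQ (fun _ => Q) ->
  (forall B, measurable B -> QQ B <= e%:E + K%:E * PP B) ->
  (0 <= K)%R -> (0 <= e)%R ->
  forall A, measurable A -> muS A <= e%:E + K%:E * mu0 A.
Proof.
move=> H0 HS HP HQ HB K0 e0 A mA.
have H0' : has_rect mu0 (fun i => if i \in F then P else P).
  by move=> B mB; rewrite H0//; apply: eq_bigr => i _; case: ifP.
rewrite (merge_law H0 HQ HS A mA) (merge_law H0 HP H0' A mA).
pose C := @mergef R N F @^-1` A.
have mC : measurable C.
  by rewrite /C -[X in measurable X]setTI; exact: measurable_mergef.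
suff : \int[mu0]_y QQ (xsection C y) <=
       e%:E + K%:E * \int[mu0]_y PP (xsection C y).
  by move=> h; exact: h.
have mu0T : mu0 setT = 1.
  rewrite -(rectT R N) H0// big1// => i _; exact: probability_setT.
apply: (@le_trans _ _ (\int[mu0]_y (e%:E + K%:E * PP (xsection C y)))).
  apply: ge0_le_integral => //.
  all: try by move=> x _; apply: HB; exact: measurable_xsection.
  all: try by apply: emeasurable_funD => //; apply: emeasurable_funM => //;
    exact: measurable_fun_xsection.
  all: try exact: measurable_fun_xsection.
  all: try by move=> x _; apply: adde_ge0; rewrite ?lee_fin//; exact: mule_ge0.
rewrite ge0_integralD//; last first.
all: try by move=> x _; apply: mule_ge0; rewrite ?lee_fin.
all: try by move=> x _; rewrite lee_fin.
all: try by apply: emeasurable_funM => //; exact: measurable_fun_xsection.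
rewrite [X in X + _](_ : _ = e%:E * mu0 setT); last exact: integral_cst.
rewrite mu0T mule1 ge0_integralZl//.
all: try exact: measurable_fun_xsection.
all: try by rewrite lee_fin.
Qed.

End mixbound.
Arguments mix_bound {R N F mu0 muS P Q PP QQ e K}.
Section conv.
Variable R : realType.
Local Open Scope ereal_scope.

Lemma prod_law_rect n (mu : set (Obs R n) -> \bar R)
  (law : Edge n -> set R -> \bar R) :
  is_product_law mu law -> has_rect mu (fun i => law (enum_val i)).
Proof.
move=> H B mB.
have := H (fun e => B (enum_rank e)) (fun e => mB _).
have -> : [set x : Obs R n | forall e, B (enum_rank e) (Defs.coord x e)] = rect B.
  apply/seteqP; split => x /= Hx.
    by move=> i; have := Hx (enum_val i); rewrite /Defs.coord enum_valK.
  by move=> e; exact: Hx.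
move=> ->; rewrite (reindex (@enum_val _ {: Edge n})) /=; last first.
  by apply: onW_bij; exact: enum_val_bij.
by apply: eq_bigr => i _; rewrite enum_valK.
Qed.

End conv.
Arguments prod_law_rect {R n mu law}.
Section main.
Variable R : realType.
Local Open Scope ereal_scope.

Lemma card_F_bound n (S : {set 'I_n}) :
  (#|[set i : 'I_#|{: Edge n}| | in_clique S (enum_val i)]%SET| <= #|S| * #|S|)%N.
Proof.
rewrite -cardsX.
pose f := fun i : 'I_#|{: Edge n}| => sval (enum_val i).
have finj : injective f by move=> i j /val_inj /enum_val_inj.
rewrite -(card_imset _ finj).
apply/subset_leq_card/fintype.subsetP => _ /finset.imsetP [i + ->].
rewrite finset.in_set /in_clique => /andP [h1 h2].
by rewrite /f [sval _]surjective_pairing finset.in_setX h1 h2.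
Qed.

Lemma risk_lb (P Q : probability R R)
  (mu0 : forall n : nat, {measure set (Obs R n) -> \bar R})
  (muS : forall (n : nat) (S : {set 'I_n}), {measure set (Obs R n) -> \bar R})
  (k : nat -> nat) :
  Q `<< P ->
  (forall n, is_product_law (mu0 n) (fun _ => P)) ->
  (forall n (S : {set 'I_n}),
     is_product_law (muS n S) (fun e => if in_clique S e then Q else P)) ->
  forall M : nat, exists eta : R, (0 < eta)%R /\
  forall n, (k n <= n)%N -> (k n < M)%N ->
  forall T : Obs R n -> bool, measurable_fun setT T ->
  eta%:E <= risk (k n) (mu0 n) (muS n) T.
Proof.
move=> QP H0 HS M.
have eK := epsK_dom QP.
have HKex : forall m : nat, exists K : R, (0 <= K)%R /\
    exists PP QQ : probability (m.-tuple R) R,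
    [/\ has_rect PP (fun _ => P), has_rect QQ (fun _ => Q) &
        forall B, measurable B -> QQ B <= (4^-1)%:E + K%:E * PP B].
  move=> m; have [PP [QQ [HP HQ PQ]]] := tprod_ex eK m.
  have [K [K0 HK]] := PQ (4^-1)%R (ltac:(by rewrite invr_gt0 ltr0n)).
  by exists K; split => //; exists PP, QQ.
have [Kf HKf] := choice HKex.
pose K := (\sum_(j < (M * M).+1) Kf j)%R.
have K0 : (0 <= K)%R by apply: sumr_ge0 => j _; exact: (HKf j).1.
have KfK : forall m, (m <= M * M)%N -> (Kf m <= K)%R.
  move=> m hm; have hm' : (m < (M * M).+1)%N by rewrite ltnS.
  rewrite /K (bigD1 (Ordinal hm')) //= lerDl.
  by apply: sumr_ge0 => j _; exact: (HKf j).1.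
pose eta := ((4 * (K + 1))^-1)%R.
have eta0 : (0 < eta)%R by rewrite invr_gt0 mulr_gt0// ltr_wpDl.
have Keta : (K * eta <= 4^-1)%R.
  rewrite /eta ler_pdivrMr ?mulr_gt0 ?ltr_wpDl// mulrA mulVf// mul1r lerDl//.
have eta4 : (eta <= 4^-1)%R.
  by rewrite /eta lef_pV2 ?posrE ?mulr_gt0 ?ltr_wpDl// ler_pMr// lerDr.
exists eta; split => // n kn kM T mT.
pose A := T @^-1` [set true].
have mA : measurable A by rewrite -[A]setTI; apply: mT.
have AC : T @^-1` [set false] = ~` A.
  by apply/seteqP; split => x /=; rewrite /A /=; case: (T x).
rewrite /risk AC.
have H1ge0 : 0 <= H1_law (k n) (muS n) (~` A).
  rewrite /H1_law mule_ge0// ?lee_fin ?invr_ge0//.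
  by apply: sume_ge0 => S _; exact: measure_ge0.
have [hA|hA] := leP eta%:E (mu0 n A).
  by apply: (le_trans hA); rewrite leeDl.
have half : forall S : {set 'I_n}, #|S| == k n ->
    (2^-1)%:E <= muS n S (~` A).
  move=> S /eqP cS.
  have cF0 := @card_F_bound n S.
  set F := (X in (#|X| <= _)%N) in cF0.
  have cF : (#|F| <= M * M)%N.
    by apply: (leq_trans cF0); rewrite cS leq_mul// ltnW.
  have [_ [PP [QQ [HP HQ HB]]]] := HKf #|F|.
  have HSr : has_rect (muS n S) (fun i => if i \in F then Q else P).
    move=> B mB; rewrite (prod_law_rect (HS n S))//.
    by apply: eq_bigr => i _; rewrite /F finset.in_set.
  have H0r : has_rect (mu0 n) (fun _ => P) := prod_law_rect (H0 n).
  have HB' : forall B, measurable B -> QQ B <= (4^-1)%:E + K%:E * PP B.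
    move=> B mB; apply: (le_trans (HB B mB)); rewrite leeD2l//.
    by apply: lee_wpmul2r => //; rewrite lee_fin KfK.
  have e4 : (0 <= 4^-1 :> R)%R by rewrite invr_ge0.
  have bnd := mix_bound H0r HSr HP HQ HB' K0 e4 A mA.
  have muST : muS n S setT = 1.
    rewrite -(rectT R _) HSr// big1// => i _; case: ifP => _;
      exact: probability_setT.
  have hsum : muS n S A + muS n S (~` A) = 1.
    rewrite -measureU//; last by rewrite setICr.
      by rewrite setUv.
    exact: measurableC.
  have hA' : muS n S A <= (2^-1)%:E.
    apply: (le_trans bnd).
    apply: (@le_trans _ _ ((4^-1)%:E + (K * eta)%:E)).
      by rewrite leeD2l// EFinM lee_wpmul2l ?lee_fin// ltW.
    rewrite -EFinD lee_fin.
    have -> : (2^-1 = 4^-1 + 4^-1 :> R)%R by field.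
    by rewrite lerD2l.
  have a0 : 0 <= muS n S A by exact: measure_ge0.
  have afin : muS n S A \is a fin_num.
    by rewrite ge0_fin_numE// (le_lt_trans hA')// ltry.
  have -> : muS n S (~` A) = 1 - muS n S A.
    by rewrite -hsum addeAC subee// add0e.
  move: hA'; rewrite -(fineK afin) -EFinB !lee_fin => h.
  have -> : (2^-1 = 1 - 2^-1 :> R)%R by field.
  by rewrite lerB.
apply: (@le_trans _ _ (H1_law (k n) (muS n) (~` A))); last first.
  by rewrite leeDr// measure_ge0.
apply: (@le_trans _ _ (2^-1)%:E).
  rewrite lee_fin; apply: (le_trans eta4).
  by rewrite lef_pV2 ?posrE// ler_nat.
rewrite /H1_law.
have Cpos : (0 < 'C(n, k n))%N by rewrite bin_gt0.
apply: (@le_trans _ _ ((('C(n, k n))%:R)^-1%:E *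
   \sum_(S : {set 'I_n} | #|S| == k n) (2^-1)%:E)); last first.
  apply: lee_wpmul2l; first by rewrite lee_fin invr_ge0.
  by apply: lee_sum => S /half.
rewrite sumEFin -EFinM lee_fin.
have -> : (\sum_(S : {set 'I_n} | #|S| == k n) (2^-1 : R) =
   \sum_(S in [set S : {set 'I_n} | #|S| == k n]%SET) (2^-1 : R))%R.
  by apply: eq_bigl => S; rewrite finset.in_set.
rewrite sumr_const card_draws card_ord -[X in (_ * X)%R]mulr_natl mulrA.
rewrite mulVf ?mul1r//.
by rewrite pnatr_eq0 -lt0n.
Qed.

End main.
Arguments risk_lb {R P Q mu0 muS k}.
Theorem mainTheorem2 (R : realType) (P Q : probability R R)
  (mu0 : forall n : nat, {measure set (Obs R n) -> \bar R})
  (muS : forall (n : nat) (S : {set 'I_n}), {measure set (Obs R n) -> \bar R})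
  (k : nat -> nat) :
  Q `<< P ->
  (forall n, is_product_law (mu0 n) (fun _ => P)) ->
  (forall n (S : {set 'I_n}),
     is_product_law (muS n S) (fun e => if in_clique S e then Q else P)) ->
  (forall n, (2 <= n)%N -> (2 <= k n <= n)%N) ->
  opt_risk (k n) (mu0 n) (muS n) @[n --> \oo] --> 0%E ->
  forall M : nat, \forall n \near \oo, (M <= k n)%N.
Proof.
move=> QP H0 HS Hk Hcv M.
have [eta [eta0 Heta]] := risk_lb (k:=k) QP H0 HS M.
have hlt := Hcv _ (@nbhs_open_ereal_lt _ 0%R (fun=> eta) eta0).
near=> n.
have n2 : (2 <= n)%N by near: n; exact: nbhs_infty_ge.
have hn : (opt_risk (k n) (mu0 n) (muS n) < eta%:E)%E by near: n; exact: hlt.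
rewrite leqNgt; apply/negP => kM.
have /andP [_ kn] := Hk n n2.
have [y [T [mT ->]] hy] := ereal_inf_lt hn.
have := Heta n kn kM T mT.
by rewrite leNgt hy.
Unshelve. all: by end_near.
Qed.
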